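(* For every positive integer $t$, $M(t)=SM(t)$ and $OM(t)\leq M(t)\leq OM(2t)$.
   Context: A signed graph $(G,\sigma)$ is a graph (loops and parallel edges allowed) with a signature $\sigma:E(G)\to\{+,-\}$. Switching at a vertex multiplies the signs of all incident edges by $-$. A signed graph $(H,\pi)$ is a minor of $(G,\sigma)$ if it is obtained by a sequence of vertex deletions, edge deletions, contractions of positive edges, and switchings. A signed graph is balanced if it has no negative cycle (sign of a cycle = product of its edge signs); a vertex set is balanced if it induces a balanced subgraph. A balanced $k$-coloring is a partition (or cover) of the vertex set into $k$ balanced sets, and the balanced chromatic number $\chi_b(\hat G)$ is the minimum such $k$ (finite iff $\hat G$ has no negative loop). For a graph $G$, $\tilde G$ denotes the signed graph obtained by replacing every edge with a positive and a negative parallel edge, and $(G,-)$ denotes $G$ with all edges negative. $M(t)$ is the largest $k$ such that every graph of chromatic number at least $t$ contains $K_k$ as a minor. $SM(t)$ is the largest $k$ such that every signed graph with no negative loop and $\chi_b\geq t$ contains $\tilde K_k$ as a minor. $OM(t)$ is the largest $k$ such that for every graph $G$ with $\chi(G)\geq t$, the signed graph $(G,-)$ contains $(K_k,-)$ as a minor. *)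

(* Defs.v *)
From mathcomp Require Import all_boot.
Set Implicit Arguments. Unset Strict Implicit. Unset Printing Implicit Defensive.

Record mgraph := MGraph {
  gV : finType;
  gE : finType;
  gsrc : gE -> gV;
  gtgt : gE -> gV }.

Definition joins (G : mgraph) (e : gE G) (x y : gV G) : bool :=
  ((gsrc e == x) && (gtgt e == y)) || ((gsrc e == y) && (gtgt e == x)).

Definition loopless (G : mgraph) : Prop := forall e : gE G, gsrc e != gtgt e.

Lemma andb_left (a b : bool) : a && b -> a. Proof. by case/andP. Qed.
Lemma andb_right (a b : bool) : a && b -> b. Proof. by case/andP. Qed.

Definition delv (G : mgraph) (v : gV G) : mgraph :=
  @MGraph {x : gV G | x != v}
          {e : gE G | (gsrc e != v) && (gtgt e != v)}
          (fun e => exist _ (gsrc (sval e)) (andb_left (proj2_sig e)))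
          (fun e => exist _ (gtgt (sval e)) (andb_right (proj2_sig e))).

Definition dele (G : mgraph) (f : gE G) : mgraph :=
  @MGraph (gV G) {e : gE G | e != f}
          (fun e => gsrc (sval e)) (fun e => gtgt (sval e)).

(* contraction of the edge f: tgt f is merged into src f, f is removed,
   edges parallel to f become loops.  If f is a loop this is just deleting f. *)
Definition con_V (G : mgraph) (f : gE G) :=
  {x : gV G | (x != gtgt f) || (gsrc f == gtgt f)}.

Lemma con_map_proof (G : mgraph) (f : gE G) (x : gV G) :
  let y := if x == gtgt f then gsrc f else x in
  (y != gtgt f) || (gsrc f == gtgt f).
Proof.
rewrite /=; case: (x =P gtgt f) => [_|/eqP h]; last by rewrite h.
by case: (gsrc f == gtgt f).
Qed.

Definition con_map (G : mgraph) (f : gE G) (x : gV G) : con_V f :=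
  exist _ (if x == gtgt f then gsrc f else x) (con_map_proof f x).

Definition contr (G : mgraph) (f : gE G) : mgraph :=
  @MGraph (con_V f) {e : gE G | e != f}
          (fun e => con_map f (gsrc (sval e))) (fun e => con_map f (gtgt (sval e))).

Definition miso (G H : mgraph) : Prop :=
  exists (phi : gV G -> gV H) (psi : gE G -> gE H),
    [/\ bijective phi, bijective psi &
        forall e, joins (psi e) (phi (gsrc e)) (phi (gtgt e))].

Inductive mstep (G : mgraph) : mgraph -> Prop :=
| MS_delv (v : gV G) : mstep G (delv v)
| MS_dele (e : gE G) : mstep G (dele e)
| MS_contr (e : gE G) : mstep G (contr e).

Inductive mreach : mgraph -> mgraph -> Prop :=
| MR_refl G : mreach G G
| MR_step G G' G'' : mstep G G' -> mreach G' G'' -> mreach G G''.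

Definition mminor (H G : mgraph) : Prop := exists G', mreach G G' /\ miso G' H.

Definition colorable (G : mgraph) (k : nat) : Prop :=
  exists c : gV G -> 'I_k, forall e : gE G, c (gsrc e) != c (gtgt e).
Definition chi_ge (G : mgraph) (t : nat) : Prop :=
  forall k, colorable G k -> t <= k.

Definition K (k : nat) : mgraph :=
  @MGraph 'I_k {p : 'I_k * 'I_k | p.1 < p.2}
          (fun p => (sval p).1) (fun p => (sval p).2).

Record sgraph := SGraph { ug : mgraph; sneg : gE ug -> bool }.

Definition sdelv (G : sgraph) (v : gV (ug G)) : sgraph :=
  @SGraph (delv v) (fun e => sneg (sval e)).
Definition sdele (G : sgraph) (f : gE (ug G)) : sgraph :=
  @SGraph (dele f) (fun e => sneg (sval e)).
Definition scontr (G : sgraph) (f : gE (ug G)) : sgraph :=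
  @SGraph (contr f) (fun e => sneg (sval e)).
(* switching at v: the sign of every edge with exactly one end at v is
   flipped (a loop at v meets v twice, so its sign is unchanged) *)
Definition sswitch (G : sgraph) (v : gV (ug G)) : sgraph :=
  @SGraph (ug G) (fun e => sneg e (+) ((gsrc e == v) (+) (gtgt e == v))).

Definition siso (G H : sgraph) : Prop :=
  exists (phi : gV (ug G) -> gV (ug H)) (psi : gE (ug G) -> gE (ug H)),
    [/\ bijective phi, bijective psi,
        forall e, joins (psi e) (phi (gsrc e)) (phi (gtgt e)) &
        forall e, sneg (psi e) = sneg e].

Inductive sstep (G : sgraph) : sgraph -> Prop :=
| SS_delv (v : gV (ug G)) : sstep G (sdelv v)
| SS_dele (e : gE (ug G)) : sstep G (sdele e)
| SS_contr (e : gE (ug G)) : ~~ sneg e -> sstep G (scontr e)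
| SS_switch (v : gV (ug G)) : sstep G (sswitch v).

Inductive sreach : sgraph -> sgraph -> Prop :=
| SR_refl G : sreach G G
| SR_step G G' G'' : sstep G G' -> sreach G' G'' -> sreach G G''.

Definition sminor (H G : sgraph) : Prop := exists G', sreach G G' /\ siso G' H.

(* cycles: a nonempty sequence [(v0,e0);...;(v_{n-1},e_{n-1})] of distinct
   vertices and distinct edges, e_i joining v_i and v_{i+1 mod n}
   (n = 1: a loop; n = 2: two parallel edges) *)
Definition gcycle (G : mgraph) (s : seq (gV G * gE G)) : bool :=
  [&& 0 < size s, uniq (map fst s), uniq (map snd s) &
      all (fun p => joins p.1.2 p.1.1 p.2.1) (zip s (rot 1 s))].

Definition neg_cycle (G : sgraph) (s : seq (gV (ug G) * gE (ug G))) : bool :=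
  odd (count (fun p => sneg p.2) s).

Definition balanced_set (G : sgraph) (U : pred (gV (ug G))) : Prop :=
  forall s, gcycle s -> all (fun p => U p.1) s -> ~~ neg_cycle s.

Definition no_neg_loop (G : sgraph) : Prop :=
  forall e : gE (ug G), gsrc e == gtgt e -> ~~ sneg e.

Definition bcolorable (G : sgraph) (k : nat) : Prop :=
  exists c : gV (ug G) -> 'I_k,
    forall i : 'I_k, balanced_set (fun x => c x == i).
Definition chib_ge (G : sgraph) (t : nat) : Prop :=
  forall k, bcolorable G k -> t <= k.

(* G~ : every edge replaced by a positive and a negative parallel edge *)
Definition tilde (G : mgraph) : sgraph :=
  @SGraph (@MGraph (gV G) (gE G * bool)%type
                   (fun p => gsrc p.1) (fun p => gtgt p.1)) (fun p => p.2).
Definition allneg (G : mgraph) : sgraph := @SGraph G (fun _ => true).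

Definition is_max (P : nat -> Prop) (m : nat) : Prop :=
  P m /\ forall k, P k -> k <= m.

Definition PM (t k : nat) : Prop :=
  forall G : mgraph, loopless G -> chi_ge G t -> mminor (K k) G.
Definition PSM (t k : nat) : Prop :=
  forall G : sgraph, no_neg_loop G -> chib_ge G t -> sminor (tilde (K k)) G.
Definition POM (t k : nat) : Prop :=
  forall G : mgraph, loopless G -> chi_ge G t ->
    sminor (allneg (K k)) (allneg G).

(* Main.v *)
Require Import Defs.
From mathcomp Require Import all_boot.
From Stdlib Require Import Classical.
Set Implicit Arguments. Unset Strict Implicit. Unset Printing Implicit Defensive.

Lemma joinsP (G : mgraph) (e : gE G) x y : joins e x y ->
  (gsrc e = x /\ gtgt e = y) \/ (gsrc e = y /\ gtgt e = x).
Proof. by case/orP => /andP [/eqP -> /eqP ->]; [left|right]. Qed.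

Lemma joins_refl (G : mgraph) (e : gE G) : joins e (gsrc e) (gtgt e).
Proof. by rewrite /joins !eqxx. Qed.

Lemma joinsC (G : mgraph) (e : gE G) x y : joins e x y = joins e y x.
Proof. by rewrite /joins orbC. Qed.

Definition pcolorable (G : sgraph) (k : nat) : Prop :=
  exists (c : gV (ug G) -> 'I_k) (f : gV (ug G) -> bool),
    forall e, c (gsrc e) == c (gtgt e) -> sneg e = f (gsrc e) (+) f (gtgt e).
Definition chibp_ge (G : sgraph) (t : nat) : Prop :=
  forall k, pcolorable G k -> t <= k.

Lemma odd_count_addb T (a b : pred T) s :
  odd (count (fun x => a x (+) b x) s) = odd (count a s) (+) odd (count b s).
Proof.
elim: s => //= x s IH; rewrite !oddD IH.
by case: (a x); case: (b x) => //=; case: (odd (count a s)); case: (odd (count b s)).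
Qed.

Lemma mem_zip1 (S T : eqType) (s : seq S) (t : seq T) p :
  p \in zip s t -> p.1 \in s.
Proof.
elim: s t => [|x s IH] [|y t] //; rewrite /= !inE => /orP [/eqP -> | /IH ->];
  by rewrite ?eqxx ?orbT.
Qed.

Lemma mem_zip2 (S T : eqType) (s : seq S) (t : seq T) p :
  p \in zip s t -> p.2 \in t.
Proof.
elim: s t => [|x s IH] [|y t] //; rewrite /= !inE => /orP [/eqP -> | /IH ->];
  by rewrite ?eqxx ?orbT.
Qed.

Lemma pcol_bcol (G : sgraph) k : pcolorable G k -> bcolorable G k.
Proof.
case=> c [f Hf]; exists c => i s /and4P [_ _ _ Hall] Hin.
rewrite /neg_cycle.
have Hsz : size s <= size (rot 1 s) by rewrite size_rot.
rewrite -{1}(unzip1_zip Hsz) count_map.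
rewrite (@eq_in_count _ _ (fun p => f p.1.1 (+) f p.2.1)); last first.
  move=> p Hp /=.
  have /allP /(_ _ Hp) /= Hj := Hall.
  have H1 : c p.1.1 == i by move/allP: Hin => /(_ _ (mem_zip1 Hp)).
  have H2 : c p.2.1 == i.
    by move/allP: Hin => /(_ p.2); rewrite -(mem_rot 1); apply; apply: (mem_zip2 Hp).
  case/joinsP: Hj => [[E1 E2]|[E1 E2]]; rewrite Hf ?E1 ?E2 //.
  - by rewrite (eqP H1) (eqP H2).
  - by rewrite addbC.
  - by rewrite (eqP H1) (eqP H2).
rewrite odd_count_addb.
have -> : count (fun p => f p.1.1) (zip s (rot 1 s)) = count (fun x => f x.1) (unzip1 (zip s (rot 1 s))) by rewrite count_map.
have Hsz' : size (rot 1 s) <= size s by rewrite size_rot.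
have -> : count (fun p => f p.2.1) (zip s (rot 1 s)) = count (fun x => f x.1) (unzip2 (zip s (rot 1 s))) by rewrite count_map.
rewrite (unzip1_zip Hsz) (unzip2_zip Hsz').
have Hp : perm_eq (rot 1 s) s by rewrite perm_rot.
by rewrite (permP Hp) addbb.
Qed.

Lemma sreach_trans G1 G2 G3 : sreach G1 G2 -> sreach G2 G3 -> sreach G1 G3.
Proof. elim=> // A B C H _ IH /IH; exact: SR_step. Qed.

Lemma sreach1 G1 G2 : sstep G1 G2 -> sreach G1 G2.
Proof. move=> H; apply: SR_step H (SR_refl _). Qed.

Definition RelP (S : sgraph) (U : mgraph) (Q : pred (gE U)) : Prop :=
 exists (phi : gV (ug S) -> gV U) (pi : gE (ug S) -> gE U),
 [/\ bijective phi,
     forall e, joins (pi e) (phi (gsrc e)) (phi (gtgt e)),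
     forall u b, (exists e, pi e = u /\ sneg e = b) <-> (b || Q u) &
     forall e1 e2, pi e1 = pi e2 -> sneg e1 = sneg e2 -> e1 = e2].
Arguments RelP : clear implicits.

Lemma joins_map (G H : mgraph) (e : gE G) (u : gE H) (f : gV G -> gV H) x y :
  joins e x y -> joins u (f (gsrc e)) (f (gtgt e)) -> joins u (f x) (f y).
Proof. by case/joinsP=> [[<- <-]|[<- <-]] //; rewrite joinsC. Qed.

Lemma joins_mapf (G H : mgraph) (e : gE G) (u : gE H) (f : gV G -> gV H) :
  joins u (f (gsrc e)) (f (gtgt e)) ->
  (exists2 x, f x = gsrc u & x \in [:: gsrc e; gtgt e]) /\
  (exists2 x, f x = gtgt u & x \in [:: gsrc e; gtgt e]).
Proof.
case/joinsP=> [[-> ->]|[-> ->]]; split;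
  by [exists (gsrc e); rewrite ?inE ?eqxx | exists (gtgt e); rewrite ?inE ?eqxx ?orbT].
Qed.

Lemma joins_all (G : mgraph) (u : gE G) x y (P : pred (gV G)) :
  joins u x y -> P x -> P y -> P (gsrc u) && P (gtgt u).
Proof. by case/joinsP => [[-> ->]|[-> ->]] -> ->. Qed.

Lemma joins_all_inv (G : mgraph) (u : gE G) x y (P : pred (gV G)) :
  joins u x y -> P (gsrc u) -> P (gtgt u) -> P x && P y.
Proof. by case/joinsP => [[<- <-]|[<- <-]] -> ->. Qed.

Section Lift.
Variables (S : sgraph) (U : mgraph).

Lemma lift_delv (v : gV U) : RelP S U predT ->
  exists S', sreach S S' /\ RelP S' (delv v) predT.
Proof.
case=> phi [pi [[phi_inv phiK phi_invK] Hj Hfib Hinj]].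
set w := phi_inv v.
have Hne : forall x, x != w -> phi x != v.
  by move=> x; apply: contra => /eqP Hv; rewrite /w -Hv phiK.
have Hne' : forall y, y != v -> phi_inv y != w.
  by move=> y; apply: contra => /eqP /(congr1 phi); rewrite /w !phi_invK => /eqP.
have Hphi : forall x : {x | x != w}, phi (val x) != v by move=> [x Hx]; exact: Hne.
have Hinv : forall y : {y | y != v}, phi_inv (val y) != w by move=> [y Hy]; exact: Hne'.
have Hpi : forall e : {e : gE (ug S) | (gsrc e != w) && (gtgt e != w)},
    (gsrc (pi (val e)) != v) && (gtgt (pi (val e)) != v).
  move=> [e /andP [H1 H2]] /=.
  by apply: (joins_all (P := fun z => z != v) (Hj e)); apply: Hne.
exists (sdelv w); split; first by apply: sreach1; constructor.
exists (fun x => exist _ (phi (val x)) (Hphi x)).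
exists (fun e => exist _ (pi (val e)) (Hpi e)).
split.
- exists (fun y => exist _ (phi_inv (val y)) (Hinv y)).
  + by move=> [x Hx]; apply: val_inj => /=; rewrite phiK.
  + by move=> [y Hy]; apply: val_inj => /=; rewrite phi_invK.
- move=> e; rewrite /joins -!val_eqE /=; exact: Hj.
- move=> u b; split=> [_|_]; first by rewrite orbT.
  have [e [He Hb]] : exists e, pi e = val u /\ sneg e = b by apply/Hfib; rewrite orbT.
  have Hew : (gsrc e != w) && (gtgt e != w).
    have := Hj e; rewrite He => Hju.
    have /andP [A1 A2] := joins_all_inv (P := fun z => z != v) Hju
       (andb_left (valP u)) (andb_right (valP u)).
    by apply/andP; split; [move: A1|move: A2]; apply: contra_neq => ->; rewrite /w phi_invK.
  exists (exist (fun e0 : gE (ug S) => (gsrc e0 != w) && (gtgt e0 != w)) e Hew).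
  by split=> //; apply: val_inj.
- move=> [e1 H1] [e2 H2] /(congr1 val) /= E12 /= Es.
  by apply: val_inj => /=; exact: Hinj.
Qed.

Lemma rel_pm (Q : pred (gE U)) (pi : gE (ug S) -> gE U) u :
  (forall u b, (exists e : gE (ug S), pi e = u /\ sneg e = b) <-> (b || Q u)) ->
  (forall e1 e2, pi e1 = pi e2 -> sneg e1 = sneg e2 -> e1 = e2) -> Q u ->
  exists ep em, [/\ pi ep = u /\ sneg ep = false, pi em = u /\ sneg em = true, em != ep &
     forall e : gE (ug S), pi e = u -> e = ep \/ e = em].
Proof.
move=> Hfib Hinj Qu.
have [ep [Hep Hsp]] : exists e, pi e = u /\ sneg e = false by apply/Hfib; rewrite Qu.
have [em [Hem Hsm]] : exists e, pi e = u /\ sneg e = true by apply/Hfib.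
exists ep, em; split=> //.
  by apply/eqP => E; move: Hsm; rewrite E Hsp.
move=> e He; case Hs: (sneg e); [right|left]; apply: Hinj; rewrite ?He ?Hs //.
Qed.

Lemma lift_dele (u : gE U) : RelP S U predT ->
  exists S', sreach S S' /\ RelP S' (dele u) predT.
Proof.
case=> phi [pi [Hb Hj Hfib Hinj]].
have [ep [em [[Hep Hsp] [Hem Hsm] Hne Hpre]]] := rel_pm Hfib Hinj (isT : predT u).
pose em' : gE (ug (sdele ep)) := exist _ em Hne.
have Hpi : forall e : gE (ug (sdele em')), pi (val (val e)) != u.
  move=> [[e He1] He2] /=; rewrite -val_eqE /= in He2.
  by apply/eqP => /Hpre [] E; [move: He1|move: He2]; rewrite E eqxx.
exists (sdele em'); split.
  by apply: SR_step (sreach1 _); constructor.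
exists phi, (fun e => exist _ (pi (val (val e))) (Hpi e)); split=> //.
- by move=> e; exact: Hj.
- move=> u' b; split=> [_|_]; first by rewrite orbT.
  have [e [He Hb']] : exists e, pi e = val u' /\ sneg e = b by apply/Hfib; rewrite orbT.
  have H1 : e != ep by apply/eqP => E; move: (valP u'); rewrite -He E Hep eqxx.
  have H2 : exist (fun e0 => e0 != ep) e H1 != em'.
    by rewrite -val_eqE /=; apply/eqP => E; move: (valP u'); rewrite -He E Hem eqxx.
  exists (exist _ (exist _ e H1) H2); split=> //; exact: val_inj.
- move=> [[e1 H1] H1'] [[e2 H2] H2'] /(congr1 val) /= E12 /= Es.
  by do 2 apply: val_inj => /=; exact: Hinj.
Qed.

Lemma cm_inv (A B : eqType) (phi : A -> B) phi_inv a b c d x :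
  cancel phi phi_inv -> cancel phi_inv phi ->
  (c = phi a /\ d = phi b) \/ (c = phi b /\ d = phi a) ->
  (x != b) || (a == b) ->
  (if phi_inv (if phi x == d then c else phi x) == b then a
   else phi_inv (if phi x == d then c else phi x)) = x.
Proof.
move=> K1 K2 H Hx; have Hi := can_inj K1.
case: H => [[-> ->]|[-> ->]]; rewrite !(inj_eq Hi).
- case: (eqVneq x b) Hx => [-> /= /eqP <-|Hxb _]; first by rewrite K1 eqxx.
  by rewrite K1 (negPf Hxb).
- case: (eqVneq x a) => [->|Hxa]; first by rewrite ?eqxx K1 ?eqxx.
  rewrite K1; case: (eqVneq x b) Hx => [Exb /= /eqP Eab|//].
  by move: Hxa; rewrite Exb Eab eqxx.
Qed.

Lemma cm_phi (A B : eqType) (phi : A -> B) a b c d x :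
  (c = phi a /\ d = phi b) \/ (c = phi b /\ d = phi a) ->
  (if phi (if x == b then a else x) == d then c else phi (if x == b then a else x))
  = (if phi x == d then c else phi x).
Proof.
case: (eqVneq x b) => [->|//].
by case=> [[-> ->]|[-> ->]]; rewrite ?eqxx //; case: ifP => // /eqP.
Qed.

Lemma joins_f (G : mgraph) (T : eqType) (f : gV G -> T) (u : gE G) x y :
  joins u x y -> (f (gsrc u) == f x) && (f (gtgt u) == f y) ||
                 (f (gsrc u) == f y) && (f (gtgt u) == f x).
Proof. by case/joinsP=> [[-> ->]|[-> ->]]; rewrite !eqxx ?orbT. Qed.

Lemma lift_contr (u : gE U) : RelP S U predT ->
  exists S', sreach S S' /\ RelP S' (contr u) predT.
Proof.
case=> phi [pi [[phi_inv K1 K2] Hj Hfib Hinj]].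
have [ep [em [[Hep Hsp] [Hem Hsm] Hne Hpre]]] := rel_pm Hfib Hinj (isT : predT u).
have Hsp' : ~~ sneg ep by rewrite Hsp.
pose em' : gE (ug (scontr ep)) := exist _ em Hne.
have Hpi : forall e : gE (ug (sdele em')), pi (val (val e)) != u.
  move=> [[e He1] He2] /=; rewrite -val_eqE /= in He2.
  by apply/eqP => /Hpre [] E; [move: He1|move: He2]; rewrite E eqxx.
have Hjep := Hj ep; rewrite Hep in Hjep.
have Hc : (gsrc u = phi (gsrc ep) /\ gtgt u = phi (gtgt ep)) \/
          (gsrc u = phi (gtgt ep) /\ gtgt u = phi (gsrc ep)).
  by case/joinsP: Hjep => [[-> ->]|[-> ->]]; [left|right].
have Hc' : (gsrc ep = phi_inv (gsrc u) /\ gtgt ep = phi_inv (gtgt u)) \/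
          (gsrc ep = phi_inv (gtgt u) /\ gtgt ep = phi_inv (gsrc u)).
  by case: Hc => [[-> ->]|[-> ->]]; rewrite !K1; [left|right].
exists (sdele em'); split.
  by apply: SR_step (sreach1 _); constructor.
exists (fun x => con_map u (phi (val x))).
exists (fun e => exist _ (pi (val (val e))) (Hpi e)); split.
- exists (fun y => con_map ep (phi_inv (val y))).
  + move=> [x Hx]; apply: val_inj => /=; exact: (cm_inv K1 K2 Hc Hx).
  + move=> [y Hy]; apply: val_inj => /=; exact: (cm_inv K2 K1 Hc' Hy).
- move=> [[e He1] He2]; rewrite /joins -!val_eqE /=.
  rewrite !(cm_phi _ Hc).
  exact: (joins_f (fun z => if z == gtgt u then gsrc u else z) (Hj e)).
- move=> u' b; split=> [_|_]; first by rewrite orbT.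
  have [e [He Hb']] : exists e, pi e = val u' /\ sneg e = b by apply/Hfib; rewrite orbT.
  have H1 : e != ep by apply/eqP => E; move: (valP u'); rewrite -He E Hep eqxx.
  have H2 : exist (fun e0 => e0 != ep) e H1 != em'.
    by rewrite -val_eqE /=; apply/eqP => E; move: (valP u'); rewrite -He E Hem eqxx.
  exists (exist _ (exist _ e H1) H2); split=> //; exact: val_inj.
- move=> [[e1 H1] H1'] [[e2 H2] H2'] /(congr1 val) /= E12 /= Es.
  by do 2 apply: val_inj => /=; exact: Hinj.
Qed.
End Lift.

Lemma lift_mreach U U' : mreach U U' -> forall S, RelP S U predT ->
  exists S', sreach S S' /\ RelP S' U' predT.
Proof.
elim=> [G|G G' G'' Hs _ IH] S HR; first by exists S; split=> //; constructor.
have [S1 [HS1 HR1]] : exists S1, sreach S S1 /\ RelP S1 G' predT.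
  by case: Hs => [v|e|e]; [apply: lift_delv|apply: lift_dele|apply: lift_contr].
have [S2 [HS2 HR2]] := IH _ HR1.
by exists S2; split=> //; apply: sreach_trans HS1 HS2.
Qed.

Lemma inj_surj_bij (T T' : finType) (f : T -> T') :
  injective f -> (forall y, exists x, f x = y) -> bijective f.
Proof.
move=> Hi Hs.
have Hex : forall y, exists x, (fun x => f x == y) x.
  by move=> y; have [x Hx] := Hs y; exists x; apply/eqP.
exists (fun y => xchoose (Hex y)).
- by move=> x; apply: Hi; apply/eqP; exact: (xchooseP (Hex (f x))).
- by move=> y; apply/eqP; exact: (xchooseP (Hex y)).
Qed.

Lemma rel_tilde S U k : RelP S U predT -> miso U (K k) -> siso S (tilde (K k)).
Proof.
case=> phi [pi [Hb Hj Hfib Hinj]] [phi2 [psi2 [Hb2 [psi2_inv K1 K2] Hj2]]].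
exists (fun x => phi2 (phi x)), (fun e => (psi2 (pi e), sneg e)); split=> //.
- exact: bij_comp.
- apply: inj_surj_bij.
    move=> e1 e2 [/(can_inj K1) E1 E2]; exact: Hinj.
  move=> [kk b].
  have [e [He Hs]] : exists e, pi e = psi2_inv kk /\ sneg e = b by apply/Hfib; rewrite orbT.
  by exists e; rewrite He K2 Hs.
- move=> e; exact: (joins_map (Hj e) (Hj2 (pi e))).
Qed.

Lemma rel_neg S U k : RelP S U pred0 -> miso U (K k) -> siso S (allneg (K k)).
Proof.
case=> phi [pi [Hb Hj Hfib Hinj]] [phi2 [psi2 [Hb2 [psi2_inv K1 K2] Hj2]]].
have Hneg : forall e : gE (ug S), sneg e = true.
  move=> e; case Hs: (sneg e) => //.
  by have /Hfib : exists e0, pi e0 = pi e /\ sneg e0 = false by exists e.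
exists (fun x => phi2 (phi x)), (fun e => psi2 (pi e)); split=> //.
- exact: bij_comp.
- apply: inj_surj_bij.
    move=> e1 e2 /(can_inj K1) E1; apply: Hinj => //; by rewrite !Hneg.
  move=> kk.
  have [e [He Hs]] : exists e, pi e = psi2_inv kk /\ sneg e = true by apply/Hfib.
  by exists e; rewrite He K2.
- move=> e; exact: (joins_map (Hj e) (Hj2 (pi e))).
Qed.

Lemma rel_del_n n : forall S U (Q : pred (gE U)), #|Q| <= n -> RelP S U Q ->
  exists S', sreach S S' /\ RelP S' U pred0.
Proof.
elim: n => [|n IH] S U Q HQ HR.
  exists S; split; first by constructor.
  case: HR => phi [pi [Hb Hj Hfib Hinj]]; exists phi, pi; split=> // u b.
  have HQu : Q u = false by move: HQ; rewrite leqn0 => /eqP /card0_eq /(_ u).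
  by rewrite Hfib HQu.
case: (pickP Q) => [u0 Qu0|HQ0]; last first.
  exists S; split; first by constructor.
  case: HR => phi [pi [Hb Hj Hfib Hinj]]; exists phi, pi; split=> // u b.
  by rewrite Hfib HQ0.
case: HR => phi [pi [Hb Hj Hfib Hinj]].
have [ep [Hep Hsp]] : exists e, pi e = u0 /\ sneg e = false by apply/Hfib; rewrite Qu0.
have HR1 : RelP (sdele ep) U (predD1 Q u0).
  exists phi, (fun e => pi (val e)); split=> //.
  - move=> u b; split.
      move=> [[e He] [Hu Hs]] /=; rewrite /= in Hu Hs.
      have := proj1 (Hfib u b) (ex_intro _ e (conj Hu Hs)).
      case: b Hs => //= Hs Qu; rewrite Qu andbT.
      by apply/eqP => E; move/eqP: He; apply; apply: Hinj; rewrite ?Hu ?E ?Hep ?Hs ?Hsp.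
    move=> /= Hbu.
    have [e [Hu Hs]] : exists e, pi e = u /\ sneg e = b.
      by apply/Hfib; case: b Hbu => //= /andP [].
    have He : e != ep.
      apply/eqP => E; move: Hbu; rewrite -Hs E Hsp /= -Hu E Hep eqxx.
      by [].
    by exists (exist _ e He).
  - move=> [e1 H1] [e2 H2] /= E Es; apply: val_inj; exact: Hinj.
have Hc : #|predD1 Q u0| <= n.
  move: HQ; rewrite (cardD1 u0).
  have -> : (u0 \in Q) = true by exact: Qu0.
  by rewrite add1n ltnS.
have [S2 [HS2 HR2]] := IH _ _ _ Hc HR1.
by exists S2; split=> //; apply: SR_step HS2; constructor.
Qed.

Lemma card_sub1 (T : finType) (x : T) : #|{: {y | y != x}}| < #|T|.
Proof. rewrite card_sig (cardD1 x T) inE ltnS; apply: subset_leq_card; apply/subsetP => y; rewrite !inE andbT; done. Qed.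

Definition par (G : mgraph) (e e' : gE G) := joins e' (gsrc e) (gtgt e).

Lemma par_refl (G : mgraph) (e : gE G) : par e e.
Proof. exact: joins_refl. Qed.

Lemma par_sym (G : mgraph) (e e' : gE G) : par e e' -> par e' e.
Proof.
rewrite /par => /joinsP [[-> ->]|[-> ->]]; first exact: joins_refl.
by rewrite joinsC; exact: joins_refl.
Qed.

Lemma par_trans (G : mgraph) (e1 e2 e3 : gE G) : par e1 e2 -> par e2 e3 -> par e1 e3.
Proof. move=> H12 H23; exact: (joins_map (f := id) H12 H23). Qed.

Lemma pcol_dele (G : sgraph) (e' : gE (ug G)) k :
  (forall (c : gV (ug G) -> 'I_k) f,
     (forall e : gE (ug G), e != e' -> c (gsrc e) == c (gtgt e) -> sneg e = f (gsrc e) (+) f (gtgt e)) ->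
     c (gsrc e') == c (gtgt e') -> sneg e' = f (gsrc e') (+) f (gtgt e')) ->
  pcolorable (sdele e') k -> pcolorable G k.
Proof.
move=> H [c [f Hf]]; exists c, f => e.
have Hoth : forall e : gE (ug G), e != e' -> c (gsrc e) == c (gtgt e) -> sneg e = f (gsrc e) (+) f (gtgt e).
  by move=> e0 He0; exact: (Hf (exist _ e0 He0)).
case: (eqVneq e e') => [->|]; [exact: H | exact: Hoth].
Qed.

Lemma pcol_switch (G : sgraph) (v : gV (ug G)) k : pcolorable (sswitch v) k -> pcolorable G k.
Proof.
case=> c [f Hf]; exists c, (fun x => f x (+) (x == v)) => e /Hf /= He.
have -> : sneg e = sneg e (+) ((gsrc e == v) (+) (gtgt e == v)) (+) ((gsrc e == v) (+) (gtgt e == v)).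
  by rewrite -addbA addbb addbF.
rewrite He.
by case: (f (gsrc e)); case: (f (gtgt e)); case: (gsrc e == v); case: (gtgt e == v).
Qed.

Lemma pcol_contr (G : sgraph) (e : gE (ug G)) (He : ~~ sneg e) k :
  pcolorable (scontr e) k -> pcolorable G k.
Proof.
case=> c [f Hf]; exists (fun x => c (con_map e x)), (fun x => f (con_map e x)) => e'.
case: (eqVneq e' e) => [->|Hne] Hc.
  have -> : con_map e (gtgt e) = con_map e (gsrc e).
    apply: val_inj => /=; rewrite eqxx; case: ifP => // /eqP; done.
  by rewrite addbb; apply/negbTE.
exact: (Hf (exist _ e' Hne)).
Qed.

Lemma nnl_switch (G : sgraph) (v : gV (ug G)) : no_neg_loop G -> no_neg_loop (sswitch v).
Proof. by move=> H e /= /eqP E; rewrite E addbb addbF; apply: H; rewrite E. Qed.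

Lemma cm_eq (T : eqType) (a b x y : T) :
  (if x == b then a else x) = (if y == b then a else y) ->
  x = y \/ (x = b /\ y = a) \/ (x = a /\ y = b).
Proof.
case: (eqVneq x b) => [->|Hx]; case: (eqVneq y b) => [->|Hy] //; auto.
Qed.

Lemma nnl_contr (G : sgraph) (e : gE (ug G)) (He : ~~ sneg e) :
  (forall e', e' != e -> par e e' -> sneg e' = sneg e) ->
  no_neg_loop G -> no_neg_loop (scontr e).
Proof.
move=> Hpar Hnl [e' Hne] /= /eqP /(congr1 val) /= /cm_eq [E|[[E1 E2]|[E1 E2]]].
- by apply: Hnl; rewrite E.
- by rewrite Hpar //; rewrite /par /joins E1 E2 !eqxx ?orbT.
- by rewrite Hpar //; rewrite /par /joins E1 E2 !eqxx ?orbT.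
Qed.

Section Main.
Variables (t m : nat) (HPM : PM t m).

Definition concl (G : sgraph) :=
  exists (S : sgraph) (U : mgraph), [/\ sreach G S, RelP S U predT & miso U (K m)].

Definition IHyp (G : sgraph) :=
  forall G' : sgraph, #|gE (ug G')| < #|gE (ug G)| -> no_neg_loop G' -> chibp_ge G' t -> concl G'.

Lemma concl_pre G G' : sreach G G' -> concl G' -> concl G.
Proof. by move=> H [S [U [H1 H2 H3]]]; exists S, U; split=> //; apply: sreach_trans H H1. Qed.

Lemma contract_case (G : sgraph) (e : gE (ug G)) (He : ~~ sneg e) :
  (forall e', e' != e -> par e e' -> sneg e' = sneg e) ->
  no_neg_loop G -> chibp_ge G t -> IHyp G -> concl G.
Proof.
move=> Hpar Hnl Hchi IH.
apply: (@concl_pre _ (scontr e)); first by apply: sreach1; constructor.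
apply: IH.
- exact: card_sub1.
- exact: nnl_contr.
- by move=> k /pcol_contr Hk; apply: Hchi; exact: Hk.
Qed.


Lemma main_step (G : sgraph) : no_neg_loop G -> chibp_ge G t -> IHyp G -> concl G.
Proof.
move=> Hnl Hchi IH.
case: (classic (exists e : gE (ug G), gsrc e = gtgt e)) => [[e He]|NL].
  apply: (@concl_pre _ (sdele e)); first by apply: sreach1; constructor.
  apply: IH; first exact: card_sub1.
    by move=> e' H; exact: (Hnl (val e') H).
  move=> k /pcol_dele Hk; apply: Hchi; apply: Hk => c f _ _.
  have Hs : sneg e = false by apply/negbTE; apply: Hnl; rewrite He.
  by rewrite Hs He addbb.
case: (classic (exists e e' : gE (ug G), [/\ e != e', par e e' & sneg e' = sneg e]))
  => [[e [e' [Hne Hp Hs]]]|NB].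
  apply: (@concl_pre _ (sdele e')); first by apply: sreach1; constructor.
  apply: IH; first exact: card_sub1.
    by move=> e0 H; exact: (Hnl (val e0) H).
  move=> k /pcol_dele Hk; apply: Hchi; apply: Hk => c f Hoth Hc.
  rewrite Hs; case/joinsP: Hp => [[E1 E2]|[E1 E2]]; rewrite E1 E2 in Hc *.
    by apply: Hoth.
  by rewrite addbC; apply: Hoth; rewrite // eq_sym.
case: (classic (exists e : gE (ug G), gsrc e != gtgt e /\ forall e', e' != e -> par e e' -> sneg e' = sneg e)) => [[e [Hl Hpar]]|NA].
  case Hse: (sneg e); last first.
    by apply: (@contract_case G e) => //; rewrite Hse.
  pose G1 := sswitch (gsrc e).
  apply: (@concl_pre _ G1); first by apply: sreach1; constructor.
  apply: (@contract_case G1 e) => //.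
  - by rewrite /= Hse eqxx /= eq_sym (negbTE Hl).
  - move=> e' Hne Hp /=; rewrite Hpar //.
    by case/joinsP: Hp => [[-> ->]|[-> ->]] //; rewrite (addbC (_ == _)).
  - exact: nnl_switch.
  - by move=> k /pcol_switch; apply: Hchi.
have Hloop : forall e : gE (ug G), gsrc e != gtgt e.
  by move=> e; apply/eqP => E; apply: NL; exists e.
have HB : forall e e' : gE (ug G), e != e' -> par e e' -> sneg e' != sneg e.
  by move=> e e' Hne Hp; apply/negP => /eqP Hs; apply: NB; exists e, e'; split.
have HA : forall e : gE (ug G), exists e', [/\ e' != e, par e e' & sneg e' != sneg e].
  move=> e; apply: NNPP => Hn; apply: NA; exists e; split; first exact: Hloop.
  move=> e' Hne Hp; case: (eqVneq (sneg e') (sneg e)) => // Hd.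
  by exfalso; apply: Hn; exists e'; split.
have Hex : forall e : gE (ug G), exists e', (fun e' => ~~ sneg e' && par e e') e'.
  move=> e; case Hs: (sneg e); last by exists e; rewrite Hs par_refl.
  have [e' [_ Hp Hd]] := HA e; exists e'; rewrite Hp andbT; move: Hd; rewrite Hs.
  by case: (sneg e').
pose pe e := xchoose (Hex e).
have Hpe : forall e : gE (ug G), ~~ sneg (pe e) && par e (pe e) := fun e => xchooseP (Hex e).
have Huniq : forall e e1 e2 : gE (ug G), ~~ sneg e1 -> ~~ sneg e2 -> par e e1 -> par e e2 -> e1 = e2.
  move=> e e1 e2 H1 H2 P1 P2; case: (eqVneq e1 e2) => // Hne.
  have := HB _ _ Hne (par_trans (par_sym P1) P2).
  by rewrite (negbTE H1) (negbTE H2).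
pose U := @MGraph (gV (ug G)) {e : gE (ug G) | ~~ sneg e}
   (fun e => gsrc (val e)) (fun e => gtgt (val e)).
have HU : loopless U by move=> u; exact: Hloop.
have HchiU : chi_ge U t.
  move=> k [c Hc]; apply: Hchi; exists c, (fun _ => false) => e Hce.
  exfalso; have /andP [Hn Hp] := Hpe e.
  have := Hc (exist (fun e0 : gE (ug G) => ~~ sneg e0) (pe e) Hn) => /=.
  case/orP: (joins_f (c : gV (ug G) -> _) (Hp : joins (pe e) (gsrc e) (gtgt e))) => /andP [/eqP -> /eqP ->]; by rewrite (eqP Hce) eqxx.
have [U' [HU' Hiso]] := HPM HU HchiU.
have HR : RelP G U predT.
  exists id, (fun e => exist _ (pe e) (andb_left (Hpe e))); split.
  - by exists id.
  - move=> e; exact: (andb_right (Hpe e)).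
  - move=> u b; split=> [_|_]; first by rewrite orbT.
    case: b.
    + have [e' [Hne Hp Hd]] := HA (val u); exists e'; split.
        apply: val_inj => /=.
        exact: (Huniq e' _ _ (andb_left (Hpe e')) (valP u) (andb_right (Hpe e')) (par_sym Hp)).
      by move: Hd (valP u); case: (sneg e'); case: (sneg (val u)).
    + exists (val u); split; last by apply/negbTE; exact: (valP u).
      apply: val_inj => /=.
      exact: (Huniq (val u) _ _ (andb_left (Hpe (val u))) (valP u) (andb_right (Hpe (val u))) (par_refl _)).
  - move=> e1 e2 /(congr1 val) /= E Es; case: (eqVneq e1 e2) => // Hne.
    have P1 := andb_right (Hpe e1); have P2 := andb_right (Hpe e2).
    rewrite E in P1; have := HB _ _ Hne (par_trans P1 (par_sym P2)).
    by rewrite Es eqxx.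
have [S' [HS' HR']] := lift_mreach HU' HR.
by exists S', U'.
Qed.

Lemma main_all n : forall G : sgraph, #|gE (ug G)| <= n -> no_neg_loop G -> chibp_ge G t -> concl G.
Proof.
elim: n => [|n IHn] G HE Hnl Hchi; apply: main_step => // G' HE'.
  by move: (leq_trans HE' HE).
by move=> ? ?; apply: IHn => //; rewrite -ltnS (leq_trans HE' HE).
Qed.

End Main.

Lemma mreach_trans G1 G2 G3 : mreach G1 G2 -> mreach G2 G3 -> mreach G1 G3.
Proof. elim=> // A B C H _ IH /IH; exact: MR_step. Qed.

Lemma sreach_proj S S' : sreach S S' -> mreach (ug S) (ug S').
Proof.
elim=> [G|G G' G'' Hs _ IH]; first exact: MR_refl.
case: Hs IH => [v|e|e _|v] IH //.
- exact: MR_step (MS_delv v) IH.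
- exact: MR_step (MS_dele e) IH.
- exact: MR_step (MS_contr e) IH.
Qed.

Lemma sminor_proj H S : sminor H S -> mminor (ug H) (ug S).
Proof.
case=> S' [HS [phi [psi [H1 H2 H3 _]]]].
by exists (ug S'); split; [exact: sreach_proj | exists phi, psi].
Qed.

Definition RelB (S : sgraph) (H : mgraph) : Prop :=
  exists phi : gV (ug S) -> gV H, bijective phi /\
    forall e : gE (ug S), gsrc e = gtgt e \/ exists u : gE H, joins u (phi (gsrc e)) (phi (gtgt e)).

Lemma joins_pair (G : mgraph) (u : gE G) a b c d :
  joins u a b -> joins u c d -> (a = c /\ b = d) \/ (a = d /\ b = c).
Proof. by case/joinsP=> [[<- <-]|[<- <-]] /joinsP [[-> ->]|[-> ->]]; auto. Qed.

Lemma relb_step S S' : sstep S S' -> forall H, RelB S H -> exists H', mreach H H' /\ RelB S' H'.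
Proof.
case=> [v|f|f _|v] H [phi [[phi_inv K1 K2] Hr]].
-
  have Hne : forall x, x != v -> phi x != phi v by move=> x; rewrite (inj_eq (can_inj K1)).
  have Hphi : forall x : {x | x != v}, phi (val x) != phi v by move=> [x Hx]; exact: Hne.
  have Hinv : forall y : {y | y != phi v}, phi_inv (val y) != v.
    by move=> [y Hy] /=; apply: contra Hy => /eqP Ey; rewrite -Ey K2.
  exists (delv (phi v)); split; first exact: MR_step (MS_delv _) (MR_refl _).
  exists (fun x => exist _ (phi (val x)) (Hphi x)); split.
    exists (fun y => exist _ (phi_inv (val y)) (Hinv y)).
    + by move=> [x Hx]; apply: val_inj => /=; rewrite K1.
    + by move=> [y Hy]; apply: val_inj => /=; rewrite K2.
  move=> [e He] /=; case: (Hr e) => [E|[u Hu]]; [left; apply: val_inj => //= | right].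
  have Hu' : (gsrc u != phi v) && (gtgt u != phi v).
    by case/andP: He => H1 H2; apply: (joins_all (P := fun z => z != phi v) Hu); apply: Hne.
  exists (exist _ u Hu'); rewrite /joins -!val_eqE /=; exact: Hu.
- exists H; split; first exact: MR_refl.
  by exists phi; split; [exists phi_inv | move=> [e He]; exact: Hr].
-
  case: (eqVneq (gsrc f) (gtgt f)) => [Ef|Nf].
    exists H; split; first exact: MR_refl.
    have Hinv : forall y, (phi_inv y != gtgt f) || (gsrc f == gtgt f) by move=> y; rewrite Ef eqxx orbT.
    have Hcm : forall x, (if x == gtgt f then gsrc f else x) = x.
      by move=> x; case: ifP => // /eqP ->.
    exists (fun x => phi (val x)); split.
      exists (fun y => exist _ (phi_inv y) (Hinv y)).
      + by move=> [x Hx]; apply: val_inj => /=; rewrite K1.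
      + by move=> y /=; rewrite K2.
    move=> [e He] /=; rewrite !Hcm; case: (Hr e) => [E|[u Hu]]; [left | right; exists u => //].
    by apply: val_inj; rewrite /= !Hcm.
  case: (Hr f) => [E|[u Hu]]; first by rewrite E eqxx in Nf.
  have Hc : (gsrc u = phi (gsrc f) /\ gtgt u = phi (gtgt f)) \/
          (gsrc u = phi (gtgt f) /\ gtgt u = phi (gsrc f)).
    by case/joinsP: Hu => [[-> ->]|[-> ->]]; [left|right].
  have Hc' : (gsrc f = phi_inv (gsrc u) /\ gtgt f = phi_inv (gtgt u)) \/
          (gsrc f = phi_inv (gtgt u) /\ gtgt f = phi_inv (gsrc u)).
    by case: Hc => [[-> ->]|[-> ->]]; rewrite !K1; [left|right].
  exists (contr u); split; first exact: MR_step (MS_contr _) (MR_refl _).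
  exists (fun x => con_map u (phi (val x))); split.
    exists (fun y => con_map f (phi_inv (val y))).
    + move=> [x Hx]; apply: val_inj => /=; exact: (cm_inv K1 K2 Hc Hx).
    + move=> [y Hy]; apply: val_inj => /=; exact: (cm_inv K2 K1 Hc' Hy).
  move=> [e He] /=.
  case: (Hr e) => [E|[u' Hu']].
    by left; apply: val_inj => /=; rewrite E.
  case: (eqVneq u' u) => [Eu|Nu].
    left; apply: val_inj => /=; rewrite Eu in Hu'.
    have := joins_pair Hu' Hu.
    case=> [[/(can_inj K1) -> /(can_inj K1) ->]|[/(can_inj K1) -> /(can_inj K1) ->]];
      by rewrite ?eqxx ?(negbTE Nf) // eq_sym (negbTE Nf).
  right; exists (exist _ u' Nu); rewrite /joins -!val_eqE /=.
  rewrite !(cm_phi _ Hc).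
  exact: (joins_f (fun z => if z == gtgt u then gsrc u else z) Hu').
- exists H; split; first exact: MR_refl.
  by exists phi; split; [exists phi_inv | exact: Hr].
Qed.

Lemma relb_reach S S' : sreach S S' -> forall H, RelB S H -> exists H', mreach H H' /\ RelB S' H'.
Proof.
elim=> [G|G G' G'' Hs _ IH] H HR; first by exists H; split=> //; exact: MR_refl.
have [H1 [HH1 HR1]] := relb_step Hs HR.
have [H2 [HH2 HR2]] := IH _ HR1.
by exists H2; split=> //; apply: mreach_trans HH1 HH2.
Qed.

Lemma joins_back (G G' : mgraph) (f : gV G -> gV G') (u : gE G) (p : gE G') a b :
  joins u a b -> joins p (f a) (f b) -> joins p (f (gsrc u)) (f (gtgt u)).
Proof. by case/joinsP=> [[-> ->]|[-> ->]] //; rewrite joinsC. Qed.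

Lemma K_noloop k (p : gE (K k)) a : ~~ joins p a a.
Proof.
case: p => [[x y] /= Hxy]; rewrite /joins /= orbb.
apply/negP => /andP [/eqP Ex /eqP Ey]; move: Hxy; rewrite Ex Ey ltnn.
by [].
Qed.

Lemma K_uniq k (p p' : gE (K k)) a b : joins p a b -> joins p' a b -> p = p'.
Proof.
case: p => [[x y] /= Hxy]; case: p' => [[x' y'] /= Hxy'] H1 H2; apply: val_inj => /=.
case/joinsP: H1 => /= [[E1 E2]|[E1 E2]]; case/joinsP: H2 => /= [[E3 E4]|[E3 E4]];
  subst; rewrite // ?E1 ?E2 ?E3 ?E4 //.
- by move: (ltn_trans Hxy Hxy'); rewrite ltnn.
- by move: (ltn_trans Hxy Hxy'); rewrite ltnn.
Qed.

Definition cover k (H : mgraph) (chi : gV H -> 'I_k) :=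
  forall p : gE (K k), exists u : gE H, joins p (chi (gsrc u)) (chi (gtgt u)).

Lemma cover_step k (H : mgraph) (chi : gV H -> 'I_k) : bijective chi -> cover chi ->
  (forall H' : mgraph, #|gE H'| < #|gE H| -> forall chi' : gV H' -> 'I_k,
     bijective chi' -> cover chi' -> mminor (K k) H') -> mminor (K k) H.
Proof.
move=> Hb Hcov IH.
case: (classic (exists e : gE H, gsrc e = gtgt e \/ exists2 e', e' != e & par e e'))
  => [[e He]|Hn].
  have : mminor (K k) (dele e).
    apply: (@IH (dele e) (card_sub1 e) chi Hb) => p.
    have [u Hu] := Hcov p.
    case: (eqVneq u e) => [Eu|Nu]; last by exists (exist _ u Nu).
    subst u; case: He => [E|[e' Ne' Hp]].
      by move: Hu; rewrite E; move/negP: (K_noloop p (chi (gtgt e))).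
    by exists (exist _ e' Ne'); exact: (joins_back Hp Hu).
  by case=> H' [HR Hiso]; exists H'; split=> //; apply: MR_step (MS_dele e) HR.
have Nl : forall e : gE H, gsrc e != gtgt e.
  by move=> e; apply/eqP => E; apply: Hn; exists e; left.
have Np : forall e e' : gE H, e' != e -> ~~ par e e'.
  by move=> e e' Ne; apply/negP => Hp; apply: Hn; exists e; right; exists e'.
have Hi := bij_inj Hb.
have Hex : forall u : gE H, exists p : gE (K k), (fun p0 : gE (K k) => joins p0 (chi (gsrc u)) (chi (gtgt u))) p.
  move=> u; have Hd : chi (gsrc u) != chi (gtgt u) by rewrite (inj_eq Hi).
  case: (ltngtP (chi (gsrc u)) (chi (gtgt u))) => [Hlt|Hgt|Heq].
  - by exists (exist (fun p : 'I_k * 'I_k => p.1 < p.2) (chi (gsrc u), chi (gtgt u)) Hlt);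
      rewrite /joins /= !eqxx.
  - by exists (exist (fun p : 'I_k * 'I_k => p.1 < p.2) (chi (gtgt u), chi (gsrc u)) Hgt);
      rewrite /joins /= !eqxx orbT.
  - by move: Hd; rewrite (val_inj Heq) eqxx.
pose psi u := xchoose (Hex u).
have Hpsi : forall u, joins (psi u) (chi (gsrc u)) (chi (gtgt u)) := fun u => xchooseP (Hex u).
exists H; split; first exact: MR_refl.
exists chi, psi; split=> //.
apply: inj_surj_bij.
  move=> u1 u2 E; case: (eqVneq u1 u2) => // Nu.
  have J1 := Hpsi u1; have J2 := Hpsi u2; rewrite E in J1.
  have := Np u1 u2; rewrite eq_sym Nu => /(_ isT) /negP []; rewrite /par.
  case: (joins_pair J1 J2) => [[/Hi -> /Hi ->]|[/Hi -> /Hi ->]]; first exact: joins_refl.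
  by rewrite joinsC; exact: joins_refl.
move=> p; have [u Hu] := Hcov p; exists u; exact: K_uniq (Hpsi u) Hu.
Qed.

Lemma cover_minor k n : forall H : mgraph, #|gE H| <= n -> forall chi : gV H -> 'I_k,
  bijective chi -> cover chi -> mminor (K k) H.
Proof.
elim: n => [|n IHn] H HE chi Hb Hc; apply: (cover_step Hb Hc) => H' HE'.
  by move: (leq_trans HE' HE).
by apply: IHn; rewrite -ltnS (leq_trans HE' HE).
Qed.

Lemma PSM_PM t k : PSM t k -> PM t k.
Proof.
move=> HP G Hl Hchi.
have Hnl : no_neg_loop (tilde G) by move=> [g b] /= E; move: (Hl g); rewrite E.
have Hchib : chib_ge (tilde G) t.
  move=> k' [c Hc]; apply: Hchi; exists c => g; apply/negP => /eqP E.
  have := Hc (c (gsrc g)) [:: (gsrc g, (g,false)); (gtgt g, (g,true))].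
  rewrite /gcycle /neg_cycle /= /joins /= !eqxx /= !inE (negbTE (Hl g)) E eqxx /=.
  move=> Hx; have : ((g, false) != (g, true)) && true && true by rewrite !andbT; apply/eqP; case.
  by move/Hx/(_ isT).
have [S [HS Hiso]] := HP (tilde G) Hnl Hchib.
have HR0 : RelB (tilde G) G.
  exists id; split; first by exists id.
  by move=> [g b]; right; exists g; exact: joins_refl.
have [H' [HH' [phi [[phi_inv K1 K2] Hr]]]] := relb_reach HS HR0.
case: Hiso => phi_s [psi_s [Hbs [psi_inv P1 P2] Hj _]].
pose chi := fun y => phi_s (phi_inv y).
have Hbc : bijective chi by apply: bij_comp => //; exists phi.
have Hcov : cover chi.
  move=> p; have := Hj (psi_inv (p, false)); rewrite P2 => Hp.
  case: (Hr (psi_inv (p, false))) => [E|[u Hu]].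
    by move: Hp; rewrite E; move/negP: (K_noloop p (phi_s (gtgt (psi_inv (p, false))))).
  exists u; apply: (joins_back (G' := K k) (f := chi) (p := p) Hu); rewrite /chi !K1; exact: Hp.
have [H'' [HR'' Hiso'']] := cover_minor (leqnn _) Hbc Hcov.
by exists H''; split=> //; apply: mreach_trans HH' HR''.
Qed.

Lemma chibp_allneg (G : mgraph) t : chi_ge G (2 * t) -> chibp_ge (allneg G) t.
Proof.
move=> Hchi k [c [f Hf]].
have Hlt : forall x, f x + (nat_of_ord (c x)).*2 < 2 * k.
  move=> x; apply: (@leq_trans (c x).+1.*2); last by rewrite -mul2n leq_pmul2l.
  by rewrite doubleS; case: (f x).
have : 2 * t <= 2 * k.
  apply: Hchi; exists (fun x => Ordinal (Hlt x)) => e; apply/negP => /eqP /(congr1 val) /= E.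
  have E1 := congr1 odd E; have E2 := congr1 half E.
  rewrite !half_bit_double in E2; rewrite !oddD !odd_double !addbF in E1.
  move: (Hf e); rewrite /=; move/val_inj: E2 => ->; rewrite eqxx => /(_ isT).
  by case: (f (gsrc e)) E1; case: (f (gtgt e)).
by rewrite leq_pmul2l.
Qed.

Lemma POM_PM t k : POM t k -> PM t k.
Proof. by move=> HP G Hl Hchi; exact: (sminor_proj (HP G Hl Hchi)). Qed.

Lemma mreach_card G G' : mreach G G' -> #|gV G'| <= #|gV G|.
Proof.
elim=> // A B C Hs _ IH; apply: (leq_trans IH).
by case: Hs => [v|e|e] //=; rewrite card_sig; apply: max_card.
Qed.

Lemma PM_bound s k : PM s k -> k <= s.
Proof.
move=> HP.
have Hl : loopless (K s).
  by move=> [[x y] H] /=; apply: contraTneq H => ->; rewrite ltnn.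
have Hchi : chi_ge (K s) s.
  move=> k' [c Hc].
  have Hi : injective c.
    move=> x y E; apply/eqP; apply: contraT => Nxy.
    case: (ltngtP x y) => [Hxy|Hxy|Hxy].
    - by have := Hc (exist (fun p : 'I_s * 'I_s => p.1 < p.2) (x, y) Hxy); rewrite /= E eqxx.
    - by have := Hc (exist (fun p : 'I_s * 'I_s => p.1 < p.2) (y, x) Hxy); rewrite /= E eqxx.
    - by move: Nxy; rewrite (val_inj Hxy) eqxx.
  by have := @leq_card _ _ c Hi; rewrite /= !card_ord.
have [G' [HR [phi [psi [Hb _ _]]]]] := HP _ Hl Hchi.
have := mreach_card HR; rewrite (bij_eq_card Hb) /= !card_ord.
by [].
Qed.

Lemma sdel_all n : forall S : sgraph, #|gV (ug S)| <= n ->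
  exists S', sreach S S' /\ #|gV (ug S')| = 0.
Proof.
elim: n => [|n IH] S HS.
  by exists S; split; [constructor | apply/eqP; rewrite -leqn0].
case: (pickP (gV (ug S))) => [v _|H0].
  have Hc : #|gV (ug (sdelv v))| <= n by rewrite -ltnS (leq_trans (card_sub1 v) HS).
  have [S' [H1 H2]] := IH _ Hc.
  by exists S'; split=> //; apply: SR_step H1; constructor.
by exists S; split; [constructor | apply: eq_card0].
Qed.

Lemma POM0 s : POM s 0.
Proof.
move=> G _ _.
have [S' [HS H0]] := @sdel_all _ (allneg G) (leqnn _).
have F : gV (ug S') -> False.
  by move=> x; move/card0_eq: H0 => /(_ x); rewrite inE.
exists S'; split=> //.
exists (fun x => match F x with end), (fun e => match F (gsrc e) with end); split.
- apply: inj_surj_bij; first by move=> x; case: (F x).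
  by move=> i; exfalso; move: (ltn_ord i); rewrite ltn0.
- apply: inj_surj_bij; first by move=> x; case: (F (gsrc x)).
  move=> y; exfalso; case: y => [[i _] _]. move: (ltn_ord i); rewrite ltn0. done.
- by move=> e; case: (F (gsrc e)).
- by move=> e; case: (F (gsrc e)).
Qed.

Lemma max_exists (P : nat -> Prop) B : P 0 -> (forall k, P k -> k <= B) -> exists m, is_max P m.
Proof.
elim: B => [|B IH] H0 Hb.
  by exists 0; split=> // k /Hb; rewrite leqn0 => /eqP ->.
case: (classic (P B.+1)) => [HB|NB]; first by exists B.+1; split.
apply: IH => // k Pk; have := Hb k Pk; rewrite leq_eqVlt => /orP [/eqP E|] //.
by move: NB; rewrite -E.
Qed.

Unset Implicit Arguments.
Theorem theorem3p2 (t : nat) : 0 < t ->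
  exists m om_t om_2t : nat,
    [/\ is_max (PM t) m, is_max (PSM t) m,
        is_max (POM t) om_t, is_max (POM (2 * t)) om_2t &
        om_t <= m <= om_2t].
Proof.
move=> Ht.
have [m [Hm Hmax]] := max_exists (POM_PM (@POM0 t)) (fun k (H : PM t k) => PM_bound H).
have [o1 [Ho1 Ho1max]] := max_exists (@POM0 t) (fun k H => PM_bound (POM_PM H)).
have [o2 [Ho2 Ho2max]] := max_exists (@POM0 (2 * t)) (fun k H => PM_bound (POM_PM H)).
have PSMm : PSM t m.
  move=> G Hnl Hchib.
  have [S [U [HS HR Hiso]]] :=
    @main_all t m Hm _ G (leqnn _) Hnl (fun k Hk => Hchib k (pcol_bcol Hk)).
  by exists S; split=> //; exact: rel_tilde HR Hiso.
have POMm : POM (2 * t) m.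
  move=> G Hl Hchi.
  have Hnl : no_neg_loop (allneg G) by move=> e /eqP E; move: (Hl e); rewrite E eqxx.
  have [S [U [HS HR Hiso]]] := @main_all t m Hm _ (allneg G) (leqnn _) Hnl (chibp_allneg Hchi).
  have [S' [HS' HR']] := rel_del_n (leqnn _) HR.
  by exists S'; split; [exact: sreach_trans HS HS' | exact: rel_neg HR' Hiso].
exists m, o1, o2; split=> //.
- by split=> // k /PSM_PM; exact: Hmax.
- by rewrite (Hmax _ (POM_PM Ho1)) (Ho2max _ POMm).
Qed.
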